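(* Every finite connected chordal graph can be reduced through a sequence of erasures to a tree.
   Context: All graphs are finite, undirected, simple. A graph is chordal if every induced cycle has length three. A facet edge of $G$ is an edge $xy$ such that $\{x,y\}$ is a maximal clique of $G$. An edge of $G$ is exposed if it is contained in a unique maximal clique of $G$ and it is not a facet edge. For graphs $G,H$ on the same vertex set, $H$ is obtained from $G$ through an erasure if $G$ contains an exposed edge $e$ with $H=G-e$. *)

(* Defs.v *)
From Stdlib Require Import Relations.
From mathcomp Require Import all_boot.
Set Implicit Arguments. Unset Strict Implicit. Unset Printing Implicit Defensive.

Section Graphs.
Variable T : finType.

Definition simple_graph (G : rel T) : Prop :=
  irreflexive G /\ symmetric G.

Definition connected_graph (G : rel T) : Prop :=
  0 < #|T| /\ forall x y : T, connect G x y.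

Definition is_cycle (G : rel T) (s : seq T) : Prop :=
  [/\ uniq s, 3 <= size s & cycle G s].

Definition induced_cycle (G : rel T) (s : seq T) : Prop :=
  is_cycle G s /\
  forall x y, x \in s -> y \in s -> G x y -> (y == next s x) || (y == prev s x).

Definition chordal (G : rel T) : Prop :=
  forall s, induced_cycle G s -> size s = 3.

Definition acyclic (G : rel T) : Prop := forall s, ~ is_cycle G s.

Definition tree (G : rel T) : Prop := connected_graph G /\ acyclic G.

Definition clique (G : rel T) (K : {set T}) : Prop :=
  forall x y, x \in K -> y \in K -> x != y -> G x y.

Definition maximal_clique (G : rel T) (K : {set T}) : Prop :=
  clique G K /\ forall K' : {set T}, clique G K' -> K \subset K' -> K' = K.

Definition facet_edge (G : rel T) (x y : T) : Prop :=
  G x y /\ maximal_clique G [set x; y].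

Definition exposed_edge (G : rel T) (x y : T) : Prop :=
  [/\ G x y,
      (exists K : {set T}, maximal_clique G K /\ [set x; y] \subset K /\
         forall K' : {set T}, maximal_clique G K' -> [set x; y] \subset K' -> K' = K)
    & ~ facet_edge G x y].

Definition edge_deleted (G H : rel T) (x y : T) : Prop :=
  forall u v, H u v = G u v && ([set u; v] != [set x; y]).

Definition erasure (G H : rel T) : Prop :=
  exists x y, exposed_edge G x y /\ edge_deleted G H x y.

End Graphs.

(* Main.v *)
Require Import Defs.
From Stdlib Require Import Relations.
From mathcomp Require Import all_boot.
From Stdlib Require Import Classical.
From mathcomp Require Import zify.
Set Implicit Arguments. Unset Strict Implicit. Unset Printing Implicit Defensive.

Section Gen.
Variable T : finType.

Definition restrict (e : rel T) (P : pred T) : rel T := fun a b => [&& e a b, P a & P b].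

Lemma first_hit (e : rel T) (P : pred T) u v : connect e u v -> ~~ P u -> P v ->
  exists z w, [/\ connect (restrict e (predC P)) u z, ~~ P z, e z w & P w].
Proof.
move/connectP=> [p pth ->] {v}.
elim: p u pth => [|x p IH] u /=.
  by move=> _ Hu Hl; rewrite Hl in Hu.
move=> /andP[eux pth] Pu Pl.
case Px: (P x).
  by exists u, x; split => //; apply: connect0.
have [z [w [c1 nz ezw Pw]]] := IH x pth (negbT Px) Pl.
exists z, w; split=> //.
apply: connect_trans c1; apply: connect1.
by rewrite /restrict eux /= Pu Px.
Qed.

Lemma connect_restrict (e : rel T) (P : pred T) u v : connect e u v ->
  (forall w, connect e u w -> P w) -> connect (restrict e P) u v.
Proof.
move/connectP=> [p pth ->].
elim: p u pth => [|x p IH] u /=; first by move=> _ _; apply: connect0.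
move=> /andP[eux pth] HP.
apply: connect_trans (IH x pth _).
  apply: connect1; rewrite /restrict eux HP ?connect0 //=.
  by apply: HP; apply: connect1.
by move=> w cw; apply: HP; apply: connect_trans cw; apply: connect1.
Qed.

Lemma next_mkseq (f : nat -> T) n i : uniq (mkseq f n) -> i < n ->
  next (mkseq f n) (f i) = f (i.+1 %% n).
Proof.
move=> U Hi; rewrite next_nth.
have fin : f i \in mkseq f n by rewrite -(nth_mkseq (f 0) f Hi) mem_nth ?size_mkseq.
rewrite fin.
have idx : index (f i) (mkseq f n) = i by rewrite -(nth_mkseq (f 0) f Hi) index_uniq ?size_mkseq.
case: n U Hi fin idx => [//|n'] U Hi fin.
rewrite /mkseq /= -/(mkseq f n'.+1) => ->.
case: (ltngtP i n') => [lt|gt|eq].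
- by rewrite (nth_map 0) ?size_iota // nth_iota // add1n modn_small.
- lia.
- by rewrite nth_default ?size_map ?size_iota ?eq ?modnn.
Qed.

End Gen.

Section Gen2.
Variable T : finType.
Lemma cycle_of (G : rel T) (f : nat -> T) n : 3 <= n ->
  (forall i j, i < n -> j < n -> f i = f j -> i = j) ->
  (forall i, i < n -> G (f i) (f (i.+1 %% n))) ->
  (forall i j, i < n -> j < n -> G (f i) (f j) -> j = i.+1 %% n \/ i = j.+1 %% n) ->
  induced_cycle G (mkseq f n).
Proof.
move=> n3 inj cons nochord.
have U : uniq (mkseq f n) by apply/mkseq_uniqP => i j /= Hi Hj; apply: inj.
have memP x : x \in mkseq f n -> exists2 i, i < n & x = f i.
  by move=> /mapP[i]; rewrite mem_iota add0n => /andP[_ Hi] ->; exists i.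
split; first split => //.
- by rewrite size_mkseq.
- apply: (cycle_from_next U) => x /memP[i Hi ->].
  by rewrite next_mkseq // cons.
- move=> x y /memP[i Hi ->] /memP[j Hj ->] Gij.
  case: (nochord i j Hi Hj Gij) => [->|->].
    by rewrite next_mkseq // eqxx.
  by rewrite -next_mkseq // prev_next // eqxx orbT.
Qed.
End Gen2.

Section PC.
Variable T : finType.
Implicit Types G : rel T.

Ltac nlia := repeat match goal with
  | H : is_true (leq _ _) |- _ => revert H
  | H : is_true (leq _ _ && _) |- _ => revert H
  | H : @eq nat _ _ |- _ => revert H
  | H : ~ (@eq nat _ _) |- _ => revert H
  | H : ~ (@eq (Equality.sort _) _ _) |- _ => revert H
  | H : @eq (Equality.sort _) _ _ |- _ => revert H
  end; repeat match goal with H : _ |- _ => clear H end; lia.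

Definition outN G (c x : T) := (x != c) && ~~ G c x.
Definition Rc G c := restrict G (outN G c).
Definition PC2 G := forall c a b u v, G c a -> G c b -> a != b -> G a u -> G b v ->
  outN G c u -> outN G c v -> connect (Rc G c) u v -> G a b.

Lemma ADJ n i j : i < n -> j < n ->
  (j = i.+1 \/ (i = n.-1 /\ j = 0) \/ i = j.+1 \/ (j = n.-1 /\ i = 0)) ->
  j = i.+1 %% n \/ i = j.+1 %% n.
Proof.
move=> Hi Hj [E|[[E1 E2]|[E|[E1 E2]]]]; subst.
- by left; rewrite modn_small.
- left; rewrite prednK ?modnn //; nlia.
- by right; rewrite modn_small.
- right; rewrite prednK ?modnn //; nlia.
Qed.

Lemma chordal_PC2 G : simple_graph G -> chordal G -> PC2 G.
Proof.
move=> [irr sym] ch c a b u v Gca Gcb ab Gau Gbv ou ov conn.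
case: (boolP (G a b)) => // nab; exfalso.
pose cfg k (g : nat -> T) := [/\ forall t, t < k -> G (g t) (g t.+1),
   forall t, t <= k -> outN G c (g t), G a (g 0) & G b (g k)].
have [k [g cg]] : exists k g, cfg k g.
  move/connectP: conn => [p pth lastp].
  exists (size p), (nth u (u :: p)); split.
  - by move=> t Ht; move: pth => /(pathP u) /(_ t Ht) /and3P[].
  - move=> [|t] Ht //=.
    by move: pth => /(pathP u) /(_ t Ht) /and3P[].
  - exact Gau.
  - by rewrite -[size p]/((size (u::p)).-1) nth_last /= -lastp.
elim/ltn_ind: k g cg => k IH g [cons out ga gb].
case: (classic (exists t, 0 < t <= k /\ G a (g t))) => [[t [Ht Gat]]|C1].
  apply: (IH (k - t) _ (fun s => g (s + t))); first nlia.
  split.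
  - by move=> s Hs; rewrite addSn; apply: cons; nlia.
  - by move=> s Hs; apply: out; nlia.
  - by rewrite add0n.
  - by rewrite subnK //; nlia.
case: (classic (exists t, t < k /\ G b (g t))) => [[t [Ht Gbt]]|C2].
  apply: (IH t Ht g); split => //.
  - by move=> s Hs; apply: cons; nlia.
  - by move=> s Hs; apply: out; nlia.
case: (classic (exists t1 t2, t1.+1 < t2 <= k /\ G (g t1) (g t2))) => [[t1 [t2 [Ht Gt]]]|C3].
  have [d dE] : {d | d = t2 - t1.+1} by exists (t2 - t1.+1).
  apply: (IH (k - d) _ (fun s => if s <= t1 then g s else g (s + d))); first nlia.
  split.
  - move=> s Hs; case: (leqP s t1) => h1; case: (leqP s.+1 t1) => h2; try nlia.
    + by apply: cons; nlia.
    + have -> : s = t1 by nlia.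
      by have -> : t1.+1 + d = t2 by nlia.
    + by rewrite addSn; apply: cons; nlia.
  - by move=> s Hs; case: (leqP s t1) => h1; apply: out; nlia.
  - by rewrite leq0n.
  - rewrite ifF; last by apply/negbTE; rewrite -ltnNge; nlia.
    by have -> : k - d + d = k by nlia.
case: (classic (exists t1 t2, t1 < t2 <= k /\ g t1 = g t2)) => [[t1 [t2 [Ht Gt]]]|C4].
  have [d dE] : {d | d = t2 - t1} by exists (t2 - t1).
  apply: (IH (k - d) _ (fun s => if s <= t1 then g s else g (s + d))); first nlia.
  split.
  - move=> s Hs; case: (leqP s t1) => h1; case: (leqP s.+1 t1) => h2; try nlia.
    + by apply: cons; nlia.
    + have -> : s = t1 by nlia.
      rewrite Gt; have -> : t1.+1 + d = t2.+1 by nlia.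
      by apply: cons; nlia.
    + by rewrite addSn; apply: cons; nlia.
  - by move=> s Hs; case: (leqP s t1) => h1; apply: out; nlia.
  - by rewrite leq0n.
  - case: (leqP (k - d) t1) => h.
      have -> : k - d = t1 by nlia.
      have E : t2 = k by nlia.
      by rewrite Gt E.
    by have -> : k - d + d = k by nlia.
have Hc t : t <= k -> G c (g t) = false.
  by move=> /out /andP[_ /negbTE].
have Hc' t : t <= k -> G (g t) c = false by move=> h; rewrite sym Hc.
have Ha t : t <= k -> G a (g t) -> t = 0.
  move=> h1 h2; case: (posnP t) => // h3; exfalso; apply: C1; exists t; split=> //; nlia.
have Ha' t : t <= k -> G (g t) a -> t = 0 by rewrite sym; apply: Ha.
have Hb t : t <= k -> G b (g t) -> t = k.
  move=> h1 h2; case: (ltngtP t k) => // h3; [exfalso; apply: C2; exists t; split=> // | nlia].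
have Hb' t : t <= k -> G (g t) b -> t = k by rewrite sym; apply: Hb.
have He t1 t2 : t1 <= k -> t2 <= k -> G (g t1) (g t2) -> t2 = t1.+1 \/ t1 = t2.+1.
  move=> h1 h2 h; case: (ltngtP t1 t2) => h3.
  - case: (eqVneq t2 t1.+1) => [->|/eqP ne]; [by left|exfalso; apply: C3; exists t1, t2; split => //; nlia].
  - case: (eqVneq t1 t2.+1) => [->|/eqP ne]; [by right|exfalso; apply: C3; exists t2, t1; split; [nlia|by rewrite sym]].
  - by rewrite h3 irr in h.
have Hi t1 t2 : t1 <= k -> t2 <= k -> g t1 = g t2 -> t1 = t2.
  move=> h1 h2 h; case: (ltngtP t1 t2) => // h3; exfalso; apply: C4.
  - by exists t1, t2; split => //; nlia.
  - by exists t2, t1; split => //; nlia.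
have Nc t : t <= k -> g t = c -> False by move=> /out /andP[/eqP].
have Na t : t <= k -> g t = a -> False by move=> h E; move: (Hc t h); rewrite E Gca.
have Nb t : t <= k -> g t = b -> False by move=> h E; move: (Hc t h); rewrite E Gcb.
have ca : c = a -> False by move=> E; move: Gca; rewrite E irr.
have cb : c = b -> False by move=> E; move: Gcb; rewrite E irr.
have ab' : a = b -> False by move=> E; move: ab; rewrite E eqxx.
pose f t := if t == 0 then c else if t == 1 then a else if t <= k.+2 then g (t - 2) else b.
have fS i : i < k + 4 -> (i = 0 /\ f i = c) \/ (i = 1 /\ f i = a) \/
    (exists2 t, t <= k & i = t.+2 /\ f i = g t) \/ (i = k.+3 /\ f i = b).
  rewrite /f; case: i => [|[|i]] Hin /=; [by left|by right; left|].
  case: (leqP i k) => h.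
    by right; right; left; exists i => //; split => //; rewrite ifT; [congr g; nlia | nlia].
  right; right; right; split; first nlia.
  by rewrite ifF //; apply/negbTE; rewrite -leqNgt; nlia.
have := ch (mkseq f (k + 4)).
rewrite size_mkseq.
have H : induced_cycle G (mkseq f (k + 4)).
  apply: cycle_of; first nlia.
  - move=> i j Hi' Hj'.
    case: (fS i Hi') => [[-> ei]|[[-> ei]|[[t1 ht1 [-> ei]]|[-> ei]]]];
    case: (fS j Hj') => [[-> ej]|[[-> ej]|[[t2 ht2 [-> ej]]|[-> ej]]]];
    move=> E; rewrite ?ei ?ej in E;
    solve [ done | (have := Hi _ _ ht1 ht2 E; nlia) | (exfalso; solve [eauto]) | (exfalso; symmetry in E; solve [eauto]) ].
  - move=> i Hi'.
    have [j [Ej R]] : exists j, j = i.+1 %% (k + 4) /\ (j = i.+1 \/ (i = k.+3 /\ j = 0)).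
      exists (i.+1 %% (k + 4)); split => //.
      case: (ltngtP i.+1 (k+4)) => h; [by left; rewrite modn_small|nlia|].
      by right; rewrite h modnn; split => //; nlia.
    rewrite -Ej.
    have Hj' : j < k + 4 by rewrite Ej; apply: ltn_pmod; nlia.
    move: R;
    case: (fS i Hi') => [[-> ei]|[[-> ei]|[[t1 ht1 [-> ei]]|[-> ei]]]];
    case: (fS j Hj') => [[-> ej]|[[-> ej]|[[t2 ht2 [-> ej]]|[-> ej]]]];
    case=> [R|[R1 R2]]; rewrite ?ei ?ej;
    first [ nlia | done | by rewrite sym
          | (have -> : t2 = t1.+1 by nlia); apply: cons; nlia
          | (have -> : t1 = k by nlia); by rewrite sym
          | (have -> : t2 = 0 by nlia); done ].
  - move=> i j Hi' Hj'.
    case: (fS i Hi') => [[-> ei]|[[-> ei]|[[t1 ht1 [-> ei]]|[-> ei]]]];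
    case: (fS j Hj') => [[-> ej]|[[-> ej]|[[t2 ht2 [-> ej]]|[-> ej]]]];
    move=> Gij; rewrite ?ei ?ej in Gij; apply: ADJ; try nlia;
    first [ nlia | by rewrite irr in Gij | by rewrite Hc in Gij | by rewrite Hc' in Gij
          | (exfalso; move/negP: nab; apply; first [exact Gij | by rewrite sym])
          | (have := Ha _ ht2 Gij; nlia) | (have := Ha' _ ht1 Gij; nlia)
          | (have := Hb _ ht2 Gij; nlia) | (have := Hb' _ ht1 Gij; nlia)
          | (have := He _ _ ht1 ht2 Gij; nlia) ].
move/(_ H); nlia.
Qed.
End PC.

Section Dirac.
Variable T : finType.
Implicit Types G : rel T.

Definition clique_on G (X : {set T}) := forall a b, a \in X -> b \in X -> a != b -> G a b.
Definition simp G (X : {set T}) v := forall a b, a \in X -> b \in X -> G v a -> G v b -> a != b -> G a b.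

Lemma dirac G : simple_graph G -> PC2 G -> forall X : {set T}, clique_on G X \/
  exists v1 v2, [/\ v1 \in X, v2 \in X, ~~ G v1 v2, v1 != v2 & simp G X v1 /\ simp G X v2].
Proof.
move=> [irr sym] pc X.
have [n leXn] := ubnP #|X|; elim: n => // n IHn in X leXn *.
case: (classic (clique_on G X)) => [|ncl]; first by left.
right.
have [a [b [aX bX ab nab]]] : exists a b, [/\ a \in X, b \in X, a != b & ~~ G a b].
  apply: NNPP => H; apply: ncl => a b aX bX ab.
  case: (boolP (G a b)) => // nab; exfalso; apply: H; exists a, b; by split.
pose X' := [set w in X | (w != a) && ~~ G a w].
pose R := restrict G (fun w => w \in X').
pose C := [set w in X' | connect R b w].
pose S := [set s in X | G a s && [exists w in C, G s w]].
have bX' : b \in X' by rewrite inE bX eq_sym ab.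
have bC : b \in C by rewrite inE bX' connect0.
have CX' w : w \in C -> w \in X' by rewrite inE => /andP[].
have CX w : w \in C -> w \in X by move/CX'; rewrite inE => /andP[].
have SX w : w \in S -> w \in X by rewrite inE => /andP[].
have F1 v w : v \in C -> w \in X -> G v w -> w \in C :|: S.
  move=> vC wX Gvw; rewrite in_setU.
  case: (eqVneq w a) => [E|wa].
    exfalso; move: (CX' _ vC); rewrite inE => /and3P[_ _ /negP]; apply.
    by rewrite -E sym.
  case: (boolP (G a w)) => Gaw.
    apply/orP; right; rewrite inE wX Gaw /=.
    by apply/existsP; exists v; rewrite vC sym.
  have wX' : w \in X' by rewrite inE wX wa Gaw.
  apply/orP; left; rewrite inE wX'.
  move: vC; rewrite inE => /andP[vX' cv].
  by apply: connect_trans cv _; apply: connect1; rewrite /R /restrict Gvw vX' wX'.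
have F2 s1 s2 : s1 \in S -> s2 \in S -> s1 != s2 -> G s1 s2.
  rewrite !inE => /and3P[_ Gas1 /existsP[w1 /andP[w1C G1]]] /and3P[_ Gas2 /existsP[w2 /andP[w2C G2]]] ne.
  apply: (pc a s1 s2 w1 w2) => //.
  - by move: (CX' _ w1C); rewrite inE /outN => /andP[].
  - by move: (CX' _ w2C); rewrite inE /outN => /andP[].
  have symR : symmetric R by move=> x y; rewrite /R /restrict sym (andbC (x \in X')).
  move: w1C w2C; rewrite !inE => /andP[_ c1] /andP[_ c2].
  have c12 : connect R w1 w2 by apply: connect_trans c2; rewrite (sym_connect_sym symR).
  apply: connect_sub c12 => x y; rewrite /R /restrict !inE => /and3P[Gxy /and3P[_ xa Gax] /and3P[_ ya Gay]].
  by apply: connect1; rewrite /Rc /restrict /outN Gxy xa Gax ya Gay.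
have aS : a \notin S by rewrite inE irr andbF.
have aC : a \notin C by apply/negP => /CX'; rewrite inE eqxx andbF.
have [v [vC sv]] : exists v, v \in C /\ simp G X v.
  have ltY : #|C :|: S| < n.
    apply: (@leq_trans #|X|); last by rewrite -ltnS.
    apply: proper_card; apply/properP; split.
      by apply/subsetP => w; rewrite in_setU => /orP[/CX|/SX].
    by exists a => //; rewrite in_setU negb_or aC aS.
  have lift v : v \in C -> simp G (C :|: S) v -> simp G X v.
    move=> vC sv x y xX yX Gvx Gvy xy; apply: sv => //; exact: F1 vC _ _.
  case: (IHn _ ltY) => [cl|[v1 [v2 [v1Y v2Y nG ne [s1 s2]]]]].
    exists b; split => //; apply: lift => // x y xY yY _ _ xy; exact: cl.
  move: v1Y v2Y; rewrite !in_setU => /orP[v1C|v1S] /orP[v2C|v2S].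
  - by exists v1; split => //; apply: lift.
  - by exists v1; split => //; apply: lift.
  - by exists v2; split => //; apply: lift.
  - by move: nG; rewrite F2.
have [v' [v'X [v'C v'S] sv']] : exists v', [/\ v' \in X, v' \notin C /\ v' \notin S & simp G X v'].
  have ltY : #|X :\: C| < n.
    apply: (@leq_trans #|X|); last by rewrite -ltnS.
    apply: proper_card; apply/properP; split.
      by apply/subsetP => w; rewrite in_setD => /andP[].
    by exists b => //; rewrite in_setD bC.
  have lift z : z \in X -> z \notin C -> z \notin S -> simp G (X :\: C) z -> simp G X z.
    move=> zX zC zS sz x y xX yX Gzx Gzy xy; apply: sz => //; rewrite in_setD ?xX ?yX andbT.
    - apply/negP => xC; have := F1 _ _ xC zX; rewrite sym Gzx in_setU (negbTE zC) (negbTE zS).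
      by move/(_ isT).
    - apply/negP => yC; have := F1 _ _ yC zX; rewrite sym Gzy in_setU (negbTE zC) (negbTE zS).
      by move/(_ isT).
  case: (IHn _ ltY) => [cl|[v1 [v2 [v1Y v2Y nG ne [s1 s2]]]]].
    by exists a; split => //; apply: lift => // x y xY yY _ _ xy; exact: cl.
  move: v1Y v2Y; rewrite !in_setD => /andP[v1C v1X] /andP[v2C v2X].
  case: (boolP (v1 \in S)) => v1S.
    case: (boolP (v2 \in S)) => v2S; first by move: nG; rewrite F2.
    by exists v2; split => //; apply: lift.
  by exists v1; split => //; apply: lift.
exists v, v'; split => //.
- exact: CX.
- apply/negP => Gvv'; have := F1 _ _ vC v'X Gvv'.
  by rewrite in_setU (negbTE v'C) (negbTE v'S).
- by apply/eqP => E; move: v'C; rewrite -E vC.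
Qed.

End Dirac.

Section Final.
Variable T : finType.
Implicit Types G : rel T.

Lemma simp_exists G : simple_graph G -> PC2 G -> forall X : {set T}, X != set0 ->
  exists v, v \in X /\ simp G X v.
Proof.
move=> sG pc X /set0Pn[w wX].
case: (dirac sG pc X) => [cl|[v1 [v2 [v1X _ _ _ [s1 _]]]]]; last by exists v1.
by exists w; split => // a b aX bX _ _ ab; apply: cl.
Qed.

Lemma cycle_triangle G s : simple_graph G -> PC2 G -> is_cycle G s ->
  exists v p q, [/\ G v p, G v q & G p q].
Proof.
move=> sG pc [U sz cy]; have [irr sym] := sG.
case: s U sz cy => [//|z s0] U sz cy.
pose X := [set w | w \in z :: s0].
have : X != set0 by apply/set0Pn; exists z; rewrite inE mem_head.
move/(simp_exists sG pc) => [v [vX sv]].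
move: vX; rewrite inE => vs.
case: (rot_to vs) => i s' E.
have cy' : cycle G (v :: s') by rewrite -E rot_cycle.
have U' : uniq (v :: s') by rewrite -E rot_uniq.
have sz' : 2 <= size s' by move: sz; rewrite -(size_rot i) E.
have ins w : w \in v :: s' -> w \in X by move=> h; rewrite inE -(mem_rot i) E.
case: s' E cy' U' sz' ins => [|w1 [|y t]] // E cy' U' _ ins.
move: cy'; rewrite (cycle_path v) /= => /and3P[Gl Gvw1 _].
have nw : w1 \notin y :: t by move: U'; rewrite cons_uniq => /andP[_]; rewrite cons_uniq => /andP[].
exists v, w1, (last y t); split => //; first by rewrite sym.
apply: sv.
- by apply: ins; rewrite !inE eqxx orbT.
- by apply: ins; rewrite in_cons; apply/orP; right; rewrite in_cons; apply/orP; right; exact: mem_last.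
- done.
- by rewrite sym.
- by apply/eqP => E2; move: nw; rewrite E2 mem_last.
Qed.

Lemma exposed_of G x y : simple_graph G -> G x y ->
  (forall z1 z2, G x z1 -> G y z1 -> G x z2 -> G y z2 -> z1 != z2 -> G z1 z2) ->
  (exists q, G x q /\ G y q) -> exposed_edge G x y.
Proof.
move=> [irr sym] Gxy cn [q [Gxq Gyq]].
pose K := [set z | (z == x) || (z == y) || (G x z && G y z)].
have xK : x \in K by rewrite inE eqxx.
have yK : y \in K by rewrite inE eqxx orbT.
have clK : clique G K.
  move=> a b; rewrite !inE => /orP[/orP[/eqP->|/eqP->]|/andP[Gxa Gya]] /orP[/orP[/eqP->|/eqP->]|/andP[Gxb Gyb]] ab //.
  - by rewrite eqxx in ab.
  - by rewrite sym.
  - by rewrite eqxx in ab.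
  - by rewrite sym.
  - by rewrite sym.
  - exact: cn.
have sub K' : clique G K' -> x \in K' -> y \in K' -> K' \subset K.
  move=> cl xK' yK'; apply/subsetP => z zK'; rewrite inE.
  case: (eqVneq z x) => //= zx; case: (eqVneq z y) => //= zy.
  by rewrite (cl x z) ?(cl y z) // eq_sym.
have maxK : maximal_clique G K.
  split => // K' cl' sKK'; apply/eqP; rewrite eqEsubset sKK' andbT.
  by apply: sub => //; apply: (subsetP sKK').
have sxy : [set x; y] \subset K by apply/subsetP => z; rewrite !inE => /orP[->|->]; rewrite ?orbT.
split => //.
  exists K; split => //; split => // K' [cl' mx'] sK'.
  have xK' : x \in K' by apply: (subsetP sK'); rewrite !inE eqxx.
  have yK' : y \in K' by apply: (subsetP sK'); rewrite !inE eqxx orbT.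
  by apply/esym/mx' => //; apply: sub.
move=> [_ [_ mx]].
have := mx K clK sxy => E.
have : q \in K by rewrite inE Gxq Gyq !orbT.
rewrite E !inE => /orP[/eqP E1|/eqP E1].
  by move: Gxq; rewrite E1 irr.
by move: Gyq; rewrite E1 irr.
Qed.

Definition cnclique G x y := forall z1 z2, G x z1 -> G y z1 -> G x z2 -> G y z2 -> z1 != z2 -> G z1 z2.

Lemma find_exposed G : simple_graph G -> PC2 G -> (exists v p q, [/\ G v p, G v q & G p q]) ->
  exists x y, [/\ G x y, cnclique G x y & exists q, G x q /\ G y q].
Proof.
move=> sG pc [v0 [p0 [q0 [G1 G2 G3]]]]; have [irr sym] := sG.
pose X := [set z | [exists p, exists q, [&& G z p, G z q & G p q]]].
have : X != set0.
  apply/set0Pn; exists v0; rewrite inE; apply/existsP; exists p0; apply/existsP; exists q0.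
  by rewrite G1 G2 G3.
move/(simp_exists sG pc) => [v [vX sv]].
move: (vX); rewrite inE => /existsP[p /existsP[q /and3P[Gvp Gvq Gpq]]].
exists v, p; split => //.
  move=> z1 z2 Gv1 Gp1 Gv2 Gp2 ne; apply: sv => //.
  - rewrite inE; apply/existsP; exists v; apply/existsP; exists p; by rewrite sym Gv1 sym Gp1 Gvp.
  - rewrite inE; apply/existsP; exists v; apply/existsP; exists p; by rewrite sym Gv2 sym Gp2 Gvp.
by exists q; split => //; rewrite sym.
Qed.


End Final.

Section L2.
Variable T : finType.
Implicit Types G : rel T.

Definition del G (x y : T) : rel T := fun u w => G u w && ([set u; w] != [set x; y]).

Lemma del_sym G x y : del G x y = del G y x.
Proof. by rewrite /del setUC. Qed.

Lemma set2_out (c w x y : T) : c != x -> c != y -> [set c; w] != [set x; y].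
Proof.
move=> cx cy; apply/negP => /eqP E.
have : c \in [set x; y] by rewrite -E !inE eqxx.
by rewrite !inE (negbTE cx) (negbTE cy).
Qed.

Lemma set2_x (x w y : T) : x != y -> w != y -> [set x; w] != [set x; y].
Proof.
move=> xy wy; apply/negP => /eqP E.
have : y \in [set x; w] by rewrite E !inE eqxx orbT.
by rewrite !inE eq_sym (negbTE xy) eq_sym (negbTE wy).
Qed.

Lemma set2_eq (a b x y : T) : x != y -> [set a; b] = [set x; y] ->
  (a = x /\ b = y) \/ (a = y /\ b = x).
Proof.
move=> xy E.
have aI : a \in [set x; y] by rewrite -E !inE eqxx.
have bI : b \in [set x; y] by rewrite -E !inE eqxx orbT.
have xI : x \in [set a; b] by rewrite E !inE eqxx.
have yI : y \in [set a; b] by rewrite E !inE eqxx orbT.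
move: aI bI xI yI; rewrite !inE.
case/orP=> /eqP ea; subst a.
- by case/orP=> /eqP eb _; case/orP=> /eqP ey; subst; rewrite ?eqxx in xy; auto.
- by case/orP=> /eqP eb; case/orP=> /eqP ex _; subst; rewrite ?eqxx in xy; auto.
Qed.

Lemma connect_symm (e : rel T) : symmetric e -> forall u v, connect e u v -> connect e v u.
Proof. by move=> se u v; rewrite (sym_connect_sym se). Qed.

Lemma Rc_sym G c : symmetric G -> symmetric (Rc G c).
Proof. by move=> sym p q; rewrite /Rc /restrict sym andbCA andbA [_ && outN G c p]andbC -andbA andbCA. Qed.

End L2.

Section L2b.
Variable T : finType.
Implicit Types G : rel T.

Lemma center G x y a b u v : simple_graph G -> PC2 G -> G x y -> cnclique G x y ->
  del G x y x a -> del G x y x b -> a != b -> del G x y a u -> del G x y b v ->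
  outN (del G x y) x u -> outN (del G x y) x v -> connect (Rc (del G x y) x) u v -> G a b.
Proof.
move=> [irr sym] pc Gxy cn Hxa Hxb ab Hau Hbv ou ov conn.
set H := del G x y in Hxa Hxb Hau Hbv ou ov conn.
have Hsub p q : H p q -> G p q by case/andP.
have xy : x != y by apply/eqP => E; move: Gxy; rewrite E irr.
have Hxw w : w != y -> H x w = G x w by move=> wy; rewrite /H /del set2_x // andbT.
have outG w : outN H x w -> w != y -> outN G x w.
  by move=> /andP[wx nH] wy; rewrite /outN wx -Hxw.
have ay : a != y by apply/eqP => E; move: Hxa; rewrite E /H /del eqxx andbF.
have by' : b != y by apply/eqP => E; move: Hxb; rewrite E /H /del eqxx andbF.
set Q := Rc H x in conn.
have symH : symmetric H by move=> p q; rewrite /H /del sym setUC.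
have symQ : symmetric Q by apply: Rc_sym.
have toG p q : restrict Q (predC (pred1 y)) p q -> Rc G x p q.
  move=> /and3P[/and3P[Hpq op oq] py qy].
  by rewrite /Rc /restrict Hsub // outG // outG.
case: (boolP (connect Q u y)) => cuy.
  have side p w : outN H x w -> G p w -> connect Q w y -> G x p -> p != y -> G p y.
    move=> ow Gpw cwy Gxp py.
    case: (eqVneq w y) => [<-//|wy].
    have [z [w' [c1 nz Qzw Pw]]] := first_hit cwy (P := pred1 y) (negbT (negbTE wy)) (eqxx y).
    move/eqP: Pw => Pw; subst w'.
    have [Hzy oz _] : [/\ H z y, outN H x z & outN H x y] by apply/and3P.
    apply: (pc x p y w z) => //.
    - by rewrite sym Hsub.
    - by apply: outG.
    - by apply: outG.
    - by apply: connect_sub c1 => p' q' /toG; apply: connect1.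
  have Gay : G a y by apply: (side a u) => //; [exact: Hsub | exact: Hsub].
  have cvy : connect Q v y by apply: connect_trans cuy; apply: connect_symm.
  have Gby : G b y by apply: (side b v) => //; [exact: Hsub | exact: Hsub].
  by apply: cn => //; [exact: Hsub | rewrite sym | exact: Hsub | rewrite sym].
have nR w : connect Q u w -> w != y by move=> cw; apply/eqP => E; rewrite -E cw in cuy.
have uy : u != y by apply: nR; apply: connect0.
have vy : v != y by apply: nR.
apply: (pc x a b u v) => //.
- exact: Hsub.
- exact: Hsub.
- exact: Hsub.
- exact: Hsub.
- exact: outG.
- exact: outG.
- have := connect_restrict conn nR.
  by apply: connect_sub => p q /toG; apply: connect1.
Qed.
End L2b.

Section L2c.
Variable T : finType.
Implicit Types G : rel T.

Lemma noflip G x y c u v : simple_graph G -> PC2 G -> G x y -> cnclique G x y ->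
  del G x y c x -> del G x y c y -> G x u -> G y v ->
  outN (del G x y) c u -> outN (del G x y) c v -> connect (Rc (del G x y) c) u v -> False.
Proof.
move=> [irr sym] pc Gxy cn Hcx Hcy Gxu Gyv ou ov conn.
have Hsub p q : del G x y p q -> G p q by case/andP.
have Gcx : G c x by apply: Hsub.
have Gcy : G c y by apply: Hsub.
have cx : c != x by apply/eqP => E; move: Gcx; rewrite E irr.
have cy : c != y by apply/eqP => E; move: Gcy; rewrite E irr.
have Hcw w : del G x y c w = G c w by rewrite /del set2_out // andbT.
have outE w : outN (del G x y) c w = outN G c w by rewrite /outN Hcw.
rewrite outE in ou; rewrite outE in ov.
have conn' : connect (Rc G c) u v.
  apply: (connect_sub _ conn) => p q /and3P[Hpq op oq].
  by apply: connect1; rewrite /Rc /restrict Hsub // -!outE op oq.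
have symR : symmetric (Rc G c) by apply: Rc_sym.
have Gxc : G x c by rewrite sym.
have Gyc : G y c by rewrite sym.
have nout w : G x w -> G y w -> outN G c w -> False.
  move=> Gxw Gyw /andP[wc /negP]; apply; apply: cn => //; by rewrite eq_sym.
have vx : v != x by apply/eqP => E; move: ov; rewrite E /outN Gcx andbF.
have nGxv : ~~ G x v by apply/negP => Gxv; apply: (nout v) => //; rewrite sym.
pose P := fun w => (w == x) || G x w.
have Pv : ~~ P v by rewrite /P negb_or vx nGxv.
have Pu : P u by rewrite /P Gxu orbT.
have [z [w [c1 nz Rzw Pw]]] := first_hit (connect_symm symR conn') Pv Pu.
move: Rzw => /and3P[Gzw oz ow].
have wx : w != x by apply/eqP => E; move: ow; rewrite E /outN Gcx andbF.
have Gxw : G x w by move: Pw; rewrite /P (negbTE wx).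
have nGyw : ~~ G y w by apply/negP => Gyw; apply: (nout w).
have wy : w != y by apply/eqP => E; move: ow; rewrite E /outN Gcy andbF.
have outP p : ~~ P p -> outN G x p by rewrite /P negb_or.
have : G w y.
  apply: (pc x w y z v) => //.
  - by rewrite sym.
  - exact: outP.
  - exact: outP.
  - apply: connect_symm; first by apply: Rc_sym.
    apply: connect_sub c1 => p q /and3P[/and3P[Gpq _ _] pp qq].
    by apply: connect1; rewrite /Rc /restrict Gpq !outP.
by rewrite sym (negbTE nGyw).
Qed.

Lemma L2 G x y : simple_graph G -> PC2 G -> G x y -> cnclique G x y -> PC2 (del G x y).
Proof.
move=> sG pc Gxy cn; have [irr sym] := sG.
have xy : x != y by apply/eqP => E; move: Gxy; rewrite E irr.
move=> c a b u v Hca Hcb ab Hau Hbv ou ov conn.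
have Hsub p q : del G x y p q -> G p q by case/andP.
have Gab : G a b.
  case: (eqVneq c x) => [E|cx]; first by subst c; apply: (center sG pc Gxy cn Hca Hcb ab Hau Hbv ou ov conn).
  case: (eqVneq c y) => [E|cy].
    subst c; rewrite del_sym in Hca Hcb Hau Hbv ou ov conn.
    have cn' : cnclique G y x by move=> z1 z2 ? ? ? ?; apply: cn.
    by apply: (center sG pc _ cn' Hca Hcb ab Hau Hbv ou ov conn); rewrite sym.
  have Hcw w : del G x y c w = G c w by rewrite /del set2_out // andbT.
  have outE w : outN (del G x y) c w = outN G c w by rewrite /outN Hcw.
  rewrite outE in ou; rewrite outE in ov.
  apply: (pc c a b u v) => //.
  - by rewrite -Hcw.
  - by rewrite -Hcw.
  - exact: Hsub.
  - exact: Hsub.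
  - apply: (connect_sub _ conn) => p q /and3P[Hpq op oq].
    by apply: connect1; rewrite /Rc /restrict Hsub // -!outE op oq.
rewrite /del Gab /=.
apply/negP => /eqP /(set2_eq xy) [[ea eb]|[ea eb]]; subst a b.
- by apply: (noflip sG pc Gxy cn Hca Hcb _ _ ou ov conn); apply: Hsub.
- apply: (noflip sG pc Gxy cn Hcb Hca _ _ ov ou) => //; try exact: Hsub.
  by apply: connect_symm conn; apply: Rc_sym => p q; rewrite /del sym setUC.
Qed.
End L2c.


Lemma main_ind (T : finType) n : forall G : rel T, #|[set e : T * T | G e.1 e.2]| < n ->
  simple_graph G -> connected_graph G -> PC2 G ->
  exists H : rel T, clos_refl_trans (rel T) (@erasure T) G H /\ tree H.
Proof.
elim: n => // n IH G ltn sG cG pc.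
have [irr sym] := sG.
case: (classic (exists s, is_cycle G s)) => [[s cs]|nc]; last first.
  by exists G; split; [apply: rt_refl | split => // s cs; apply: nc; exists s].
have [x [y [Gxy cn [q [Gxq Gyq]]]]] := find_exposed sG pc (cycle_triangle sG pc cs).
have xy : x != y by apply/eqP => E; move: Gxy; rewrite E irr.
have qx : q != x by apply/eqP => E; move: Gxq; rewrite E irr.
have qy : q != y by apply/eqP => E; move: Gyq; rewrite E irr.
pose H := del G x y.
have er : erasure G H.
  exists x, y; split; last by [].
  by apply: exposed_of => //; exists q.
have sH : simple_graph H.
  split; first by move=> p; rewrite /H /del irr.
  by move=> p p'; rewrite /H /del sym setUC.
have symH : symmetric H by case: sH.
have Hsub p p' : H p p' -> G p p' by case/andP.
have cxy : connect H x y.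
  apply: (@connect_trans _ _ q); apply: connect1.
    by rewrite /H /del Gxq set2_x.
  by rewrite /H /del sym Gyq set2_out.
have cH : connected_graph H.
  case: cG => T0 cG; split => // p p'.
  apply: (connect_sub _ (cG p p')) => w w' Gww'.
  case: (eqVneq [set w; w'] [set x; y]) => [E|ne].
    case: (set2_eq xy E) => [[-> ->]|[-> ->]] //.
    by apply: connect_symm.
  by apply: connect1; rewrite /H /del Gww' ne.
have pcH : PC2 H by apply: L2.
have lt : #|[set e : T * T | H e.1 e.2]| < n.
  apply: (@leq_trans #|[set e : T * T | G e.1 e.2]|); last by rewrite -ltnS.
  apply: proper_card; apply/properP; split.
    by apply/subsetP => e; rewrite !inE => /Hsub.
  by exists (x, y); rewrite !inE /= ?Gxy // /H /del eqxx andbF.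
have [H' [rt tH']] := IH H lt sH cH pcH.
exists H'; split => //.
by apply: rt_trans rt; apply: rt_step.
Qed.

Theorem proposition2p10 (T : finType) (G : rel T) :
  simple_graph G -> connected_graph G -> chordal G ->
  exists H : rel T, clos_refl_trans (rel T) (@erasure T) G H /\ tree H.
Proof.
move=> sG cG ch.
by apply: (main_ind (n := #|[set e : T * T | G e.1 e.2]|.+1)) => //; apply: chordal_PC2.
Qed.
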